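(* Let $H=\{\lambda\in B_{1/\sqrt2}(0):\ \mathrm{Re}(\lambda)>0,\ \mathrm{Im}(\lambda)>0\}\setminus B_{2/3}(1/3)$. Every $\lambda_0\in\mathcal M_0\cap\mathrm{int}(H)$ is an interior point of $\mathcal M$.
   Context: $\mathbb D=\{z\in\mathbb C:|z|<1\}$; $B_r(z_0)$ is the open disc of radius $r$ centered at $z_0$. $\mathcal M=\{\lambda\in\mathbb D:\ \exists (a_k)_{k\ge1},\ a_k\in\{-1,0,1\},\ 1+\sum_{k\ge1}a_k\lambda^k=0\}$ (the set of $\lambda$ for which the attractor of $\{\lambda z-1,\lambda z+1\}$ is connected). $\mathcal M_0=\{\lambda\in\mathbb D:\ \exists n\ge1,\ a_1,\dots,a_n\in\{-1,0,1\},\ 1+\sum_{k=1}^n a_k\lambda^k=0\}$ is the set of zeros in $\mathbb D$ of polynomials of this form. *)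

(* Defs.v *)
From Stdlib Require Import Reals.
From Coquelicot Require Import Coquelicot.
Open Scope R_scope.

Definition inD (z : C) : Prop := Cmod z < 1.

Definition digit (x : R) : Prop := x = -1 \/ x = 0 \/ x = 1.

Fixpoint psum (a : nat -> R) (l : C) (n : nat) : C :=
  match n with
  | O => RtoC 0
  | S m => Cplus (psum a l m) (Cmult (RtoC (a (S m))) (Cpow l (S m)))
  end.

(* M : lambda in D with 1 + sum_{k>=1} a_k lambda^k = 0, a_k in {-1,0,1};
   the series sum_{k>=1} a_k lambda^k (indexed by n = k-1) converges to -1. *)
Definition inM (l : C) : Prop :=
  inD l /\ exists a : nat -> R, (forall k, (1 <= k)%nat -> digit (a k)) /\
    is_series (fun n : nat => Cmult (RtoC (a (S n))) (Cpow l (S n))) (RtoC (-1)).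

Definition inM0 (l : C) : Prop :=
  inD l /\ exists (n : nat) (a : nat -> R), (1 <= n)%nat /\
    (forall k, (1 <= k <= n)%nat -> digit (a k)) /\
    Cplus (RtoC 1) (psum a l n) = RtoC 0.

Definition inH (l : C) : Prop :=
  Cmod l < 1 / sqrt 2 /\ 0 < Re l /\ 0 < Im l /\
  ~ (Cmod (Cminus l (RtoC (1/3))) < 2/3).

Definition interior_pt (S : C -> Prop) (z0 : C) : Prop :=
  exists r : R, 0 < r /\ forall z : C, Cmod (Cminus z z0) < r -> S z.

(* Main.v *)
Require Import Defs.
From Stdlib Require Import Reals Lra Lia Psatz Arith.
From Coquelicot Require Import Coquelicot.
Open Scope R_scope.

Lemma im_le_Cmod (c : C) : Rabs (Im c) <= Cmod c.
Proof.
  pose proof (Cmod2_alt c). pose proof (Cmod_ge_0 c).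
  apply Rabs_le. split; nra.
Qed.

Definition dig (w : R) : R :=
  if Rlt_dec (1/2) w then -1 else if Rlt_dec w (-1/2) then 1 else 0.

Lemma dig_digit w : digit (dig w).
Proof. unfold dig, digit. destruct Rlt_dec; [left; lra|]. destruct Rlt_dec; [right; right; lra|]. right; left; lra. Qed.

Lemma dig_bound w : Rabs w <= 3/2 -> Rabs (w + dig w) <= 1/2.
Proof.
  intros H. apply Rabs_le_between in H. apply Rabs_le.
  unfold dig. destruct Rlt_dec; [lra|]. destruct Rlt_dec; lra.
Qed.

Definition wv (x y : R) (st : R * R) : R := fst st + 2 * x * snd st / (x * x + y * y).
Definition stepS (x y : R) (st : R * R) : R * R :=
  (- snd st / (x * x + y * y), wv x y st + dig (wv x y st)).
Fixpoint state (x y : R) (st0 : R * R) (n : nat) : R * R :=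
  match n with O => st0 | S m => stepS x y (state x y st0 m) end.

Definition Inv (x y : R) (st : R * R) : Prop :=
  Rabs (fst st) <= 1 / (2 * (x * x + y * y)) /\ Rabs (snd st) <= 1/2.

Lemma step_inv x y st : 0 <= x -> 0 < x * x + y * y -> 1 + 2 * x <= 3 * (x * x + y * y) ->
  Inv x y st -> Inv x y (stepS x y st).
Proof.
  intros Hx HN Hc [Hs Ht]. destruct st as [s t]; unfold Inv, stepS, wv in *; simpl in *.
  set (N := x * x + y * y) in *.
  apply Rabs_le_between in Hs. apply Rabs_le_between in Ht.
  split; simpl.
  - apply Rabs_le. assert (E : 1 / (2 * N) = (1/2) / N) by (field; lra).
    rewrite E. unfold Rdiv. split.
    + rewrite Ropp_mult_distr_l. apply Rmult_le_compat_r. left; apply Rinv_0_lt_compat; lra. lra.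
    + apply Rmult_le_compat_r. left; apply Rinv_0_lt_compat; lra. lra.
  - apply dig_bound.
    assert (E1 : s + 2 * x * t / N = (s * N + 2 * x * t) / N) by (field; lra).
    rewrite E1. apply Rabs_le.
    assert (Hs' : - (1/2) <= s * N <= 1/2).
    { assert (E : 1 / (2 * N) * N = 1/2) by (field; lra).
      split; [apply Rle_trans with (- (1 / (2 * N)) * N); [lra | apply Rmult_le_compat_r; lra]
             | apply Rle_trans with (1 / (2 * N) * N); [apply Rmult_le_compat_r; lra | lra]]. }
    assert (Hxt : - x <= 2 * x * t <= x) by nra.
    split.
    + apply Rmult_le_reg_r with N; [lra|]. unfold Rdiv. rewrite Rmult_assoc, Rinv_l by lra. lra.
    + apply Rmult_le_reg_r with N; [lra|]. unfold Rdiv. rewrite Rmult_assoc, Rinv_l by lra. lra.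
Qed.

Definition Rval (st : R * R) (l : C) : C := Cplus (Cmult (RtoC (fst st)) l) (RtoC (snd st)).

Lemma step_id (l : C) st : 0 < fst l * fst l + snd l * snd l ->
  Cmult l (Rval (stepS (fst l) (snd l) st) l) =
  Cplus (Rval st l) (Cmult (RtoC (dig (wv (fst l) (snd l) st))) l).
Proof.
  destruct l as [x y]; destruct st as [s t]; simpl; intros HN.
  unfold Rval, stepS, wv; simpl. set (d := dig (s + 2 * x * t / (x * x + y * y))).
  unfold Cmult, Cplus, RtoC; simpl.
  apply injective_projections; simpl; field; lra.
Qed.

Lemma psum_ext a b l n : (forall k, (1 <= k <= n)%nat -> a k = b k) -> psum a l n = psum b l n.
Proof.
  induction n; intros H; simpl; auto.
  rewrite IHn by (intros; apply H; lia). rewrite H by lia. reflexivity.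
Qed.

Lemma psum_S a l n : psum a l (S n) = Cplus (psum a l n) (Cmult (RtoC (a (S n))) (Cpow l (S n))).
Proof. reflexivity. Qed.

Lemma Cpow_lip (l m : C) k : Cmod l <= 1 -> Cmod m <= 1 ->
  Cmod (Cminus (Cpow l k) (Cpow m k)) <= INR k * Cmod (Cminus l m).
Proof.
  intros Hl Hm. induction k.
  - simpl. replace (Cminus 1 1) with (RtoC 0) by (unfold Cminus; ring). rewrite Cmod_0; lra.
  - replace (Cminus (Cpow l (S k)) (Cpow m (S k))) with
      (Cplus (Cmult l (Cminus (Cpow l k) (Cpow m k))) (Cmult (Cpow m k) (Cminus l m)))
      by (simpl; unfold Cminus; ring).
    eapply Rle_trans; [apply Cmod_triangle|]. rewrite !Cmod_mult, Cmod_pow, S_INR.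
    pose proof (Cmod_ge_0 (Cminus (Cpow l k) (Cpow m k))).
    pose proof (Cmod_ge_0 (Cminus l m)). pose proof (Cmod_ge_0 m). pose proof (Cmod_ge_0 l).
    assert (Cmod m ^ k <= 1) by (rewrite <- (pow1 k); apply pow_incr; lra).
    assert (0 <= Cmod m ^ k) by (apply pow_le; lra).
    nra.
Qed.

Lemma Cmod_digit x : digit x -> Cmod (RtoC x) <= 1.
Proof. intros H; rewrite Cmod_R; apply Rabs_le; unfold digit in H; lra. Qed.

Lemma psum_lip a (l m : C) n : Cmod l <= 1 -> Cmod m <= 1 ->
  (forall k, (1 <= k <= n)%nat -> digit (a k)) ->
  Cmod (Cminus (psum a l n) (psum a m n)) <= INR n * INR n * Cmod (Cminus l m).
Proof.
  intros Hl Hm. induction n; intros Hd.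
  - simpl. replace (Cminus 0 0) with (RtoC 0) by (unfold Cminus; ring). rewrite Cmod_0; lra.
  - rewrite !psum_S.
    replace (Cminus (Cplus (psum a l n) (Cmult (a (S n)) (Cpow l (S n))))
                    (Cplus (psum a m n) (Cmult (a (S n)) (Cpow m (S n)))))
      with (Cplus (Cminus (psum a l n) (psum a m n))
                  (Cmult (a (S n)) (Cminus (Cpow l (S n)) (Cpow m (S n)))))
      by (unfold Cminus; ring).
    eapply Rle_trans; [apply Cmod_triangle|]. rewrite Cmod_mult.
    pose proof (IHn (fun k Hk => Hd k ltac:(lia))).
    pose proof (Cmod_digit _ (Hd (S n) ltac:(lia))).
    pose proof (Cpow_lip l m (S n) Hl Hm).
    pose proof (Cmod_ge_0 (Cminus (Cpow l (S n)) (Cpow m (S n)))).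
    pose proof (Cmod_ge_0 (Cminus l m)). pose proof (pos_INR n).
    rewrite S_INR in *. nra.
Qed.

Lemma sum_psum a (l : C) N :
  sum_n (fun n : nat => Cmult (RtoC (a (S n))) (Cpow l (S n))) N = psum a l (S N).
Proof.
  induction N.
  - rewrite sum_O. simpl. ring.
  - rewrite sum_Sn, IHN. reflexivity.
Qed.

Definition seqa (n0 : nat) (a0 : nat -> R) (x y : R) (st0 : R * R) (k : nat) : R :=
  if (k <=? n0)%nat then a0 k else dig (wv x y (state x y st0 (k - S n0))).

Lemma rel n0 a0 (l : C) st0 : 0 < fst l * fst l + snd l * snd l ->
  Cplus 1 (psum a0 l n0) = Cmult (Cpow l n0) (Rval st0 l) ->
  forall j, Cplus 1 (psum (seqa n0 a0 (fst l) (snd l) st0) l (n0 + j)) =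
            Cmult (Cpow l (n0 + j)) (Rval (state (fst l) (snd l) st0 j) l).
Proof.
  intros HN H0. induction j.
  - rewrite Nat.add_0_r. change (state (fst l) (snd l) st0 0) with st0. rewrite <- H0. f_equal. apply psum_ext.
    intros k Hk. unfold seqa. replace (k <=? n0)%nat with true by (symmetry; apply Nat.leb_le; lia). reflexivity.
  - rewrite Nat.add_succ_r, psum_S.
    unfold seqa at 2. replace (S (n0 + j) <=? n0)%nat with false by (symmetry; apply Nat.leb_gt; lia).
    replace (S (n0 + j) - S n0)%nat with j by lia.
    simpl state.
    replace (Cmult (Cpow l (S (n0 + j))) (Rval (stepS (fst l) (snd l) (state (fst l) (snd l) st0 j)) l))
      with (Cmult (Cpow l (n0 + j)) (Cmult l (Rval (stepS (fst l) (snd l) (state (fst l) (snd l) st0 j)) l)))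
      by (simpl; ring).
    rewrite step_id by exact HN.
    replace (Cplus 1 (Cplus (psum (seqa n0 a0 (fst l) (snd l) st0) l (n0 + j))
       (Cmult (dig (wv (fst l) (snd l) (state (fst l) (snd l) st0 j))) (Cpow l (S (n0 + j))))))
      with (Cplus (Cplus 1 (psum (seqa n0 a0 (fst l) (snd l) st0) l (n0 + j)))
       (Cmult (dig (wv (fst l) (snd l) (state (fst l) (snd l) st0 j))) (Cpow l (S (n0 + j)))))
      by ring.
    rewrite IHj. simpl Cpow. ring.
Qed.

Lemma H_facts (l : C) : inH l ->
  0 < fst l /\ 0 < snd l /\ fst l * fst l + snd l * snd l < 1/2 /\
  1 + 2 * fst l <= 3 * (fst l * fst l + snd l * snd l) /\ Cmod l < 1.
Proof.
  intros [H1 [H2 [H3 H4]]]. destruct l as [x y]. simpl in *.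
  apply Rnot_lt_le in H4.
  pose proof (Cmod2_alt (Cminus (x, y) (RtoC (1/3)))) as E1. simpl in E1.
  pose proof (Cmod2_alt (x, y)) as E2. simpl in E2.
  pose proof (Cmod_ge_0 (x, y)).
  pose proof (sqrt_sqrt 2 ltac:(lra)). pose proof Rlt_sqrt2_0.
  assert (Hc : Cmod (x, y) * sqrt 2 < 1).
  { apply Rmult_lt_reg_r with (/ sqrt 2). apply Rinv_0_lt_compat; lra.
    rewrite Rmult_assoc, Rinv_r by lra. lra. }
  assert (HN : x * x + y * y < 1/2) by nra.
  repeat split; try lra.
  - nra.
  - nra.
Qed.

Lemma Rval_bound x y (l : C) st : fst l = x -> snd l = y -> 1/3 <= x * x + y * y -> Cmod l <= 1 ->
  Inv x y st -> Cmod (Rval st l) <= 2.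
Proof.
  intros Ex Ey HN Hl [Hs Ht]. unfold Rval.
  eapply Rle_trans; [apply Cmod_triangle|]. rewrite Cmod_mult, !Cmod_R.
  assert (1 / (2 * (x * x + y * y)) <= 3/2).
  { apply Rmult_le_reg_r with (2 * (x * x + y * y)); [lra|].
    unfold Rdiv; rewrite Rmult_1_l, Rinv_l by lra. lra. }
  pose proof (Rabs_pos (fst st)). pose proof (Cmod_ge_0 l). nra.
Qed.

Lemma inM_of (l : C) n0 a0 st0 : inH l ->
  (forall k, (1 <= k <= n0)%nat -> digit (a0 k)) ->
  Cplus 1 (psum a0 l n0) = Cmult (Cpow l n0) (Rval st0 l) ->
  Inv (fst l) (snd l) st0 -> inM l.
Proof.
  intros HH Hd Hz Hi.
  destruct (H_facts l HH) as [Hx [Hy [HN [Hc Hl]]]].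
  set (x := fst l) in *. set (y := snd l) in *.
  assert (HN0 : 0 < x * x + y * y) by nra.
  assert (Hinv : forall j, Inv x y (state x y st0 j)).
  { induction j; simpl; auto. apply step_inv; auto; lra. }
  pose proof (rel n0 a0 l st0 HN0 Hz) as Hrel. fold x y in Hrel.
  split; [exact Hl|].
  exists (seqa n0 a0 x y st0). split.
  - intros k Hk. unfold seqa. destruct (k <=? n0)%nat eqn:E.
    + apply Nat.leb_le in E. apply Hd. lia.
    + apply dig_digit.
  - unfold is_series. apply filterlim_locally. intros eps.
    assert (Hl' : Rabs (Cmod l) < 1) by (rewrite Rabs_pos_eq by apply Cmod_ge_0; exact Hl).
    destruct (pow_lt_1_zero (Cmod l) Hl' (eps / 3)) as [N1 HN1].
    { destruct eps; simpl; lra. }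
    exists (N1 + n0)%nat. intros N HNN.
    apply norm_compat1. change (norm (Cminus (sum_n (fun n : nat => Cmult (RtoC (seqa n0 a0 x y st0 (S n))) (Cpow l (S n))) N) (RtoC (-1))) < eps).
    change norm with Cmod. rewrite sum_psum.
    replace (Cminus (psum (seqa n0 a0 x y st0) l (S N)) (RtoC (-1)))
      with (Cplus 1 (psum (seqa n0 a0 x y st0) l (S N)))
      by (unfold Cminus; apply injective_projections; simpl; ring).
    replace (S N) with (n0 + (S N - n0))%nat by lia.
    rewrite Hrel, Cmod_mult, Cmod_pow.
    pose proof (HN1 (n0 + (S N - n0))%nat ltac:(lia)) as Hp.
    rewrite Rabs_pos_eq in Hp by (apply pow_le; apply Cmod_ge_0).
    pose proof (Rval_bound x y l _ eq_refl eq_refl ltac:(nra) ltac:(lra) (Hinv (S N - n0)%nat)).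
    pose proof (Cmod_ge_0 (Rval (state x y st0 (S N - n0)) l)).
    pose proof (pow_le (Cmod l) (n0 + (S N - n0)) (Cmod_ge_0 l)).
    destruct eps as [e He]; simpl in *. nra.
Qed.

Lemma Rval_coord (w z : C) : 0 < snd z -> Rval (Im w / snd z, Re w - Im w / snd z * fst z) z = w.
Proof.
  destruct w as [wr wi]; destruct z as [zx zy]; simpl; intros Hy.
  unfold Rval, Cmult, Cplus, RtoC; simpl. apply injective_projections; simpl; field; lra.
Qed.

Theorem mainTheorem2 (l0 : C) :
  inM0 l0 -> interior_pt inH l0 -> interior_pt inM l0.
Proof.
  intros [HD0 [n0 [a0 [Hn0 [Hd0 Hz0]]]]] [rH [HrH Hball]].
  assert (H0 : inH l0).
  { apply Hball. replace (Cminus l0 l0) with (RtoC 0) by (unfold Cminus; ring). rewrite Cmod_0; lra. }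
  destruct (H_facts l0 H0) as [Hx0 [Hy0 [HN0 [Hc0 Hl0]]]].
  set (y0 := snd l0) in *.
  set (m := y0 / 2).
  set (K := 1 + 2 / y0).
  assert (HK : 1 < K) by (unfold K; assert (0 < 2 / y0) by (apply Rdiv_lt_0_compat; lra); lra).
  set (c := 1 / (2 * K)).
  assert (Hc : 0 < c) by (unfold c; apply Rdiv_lt_0_compat; lra).
  assert (Hm : 0 < m) by (unfold m; lra).
  assert (Hmn : 0 < m ^ n0) by (apply pow_lt; lra).
  set (D := INR n0 * INR n0 + 1).
  assert (HD : 0 < D) by (unfold D; pose proof (pos_INR n0); nra).
  exists (Rmin rH (Rmin m (c * m ^ n0 / D))). split.
  { apply Rmin_glb_lt; [lra|]. apply Rmin_glb_lt; [lra|]. apply Rdiv_lt_0_compat; nra. }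
  intros z Hz.
  assert (Hz1 : Cmod (Cminus z l0) < rH) by (eapply Rlt_le_trans; [exact Hz| apply Rmin_l]).
  assert (Hz2 : Cmod (Cminus z l0) < m) by (eapply Rlt_le_trans; [exact Hz|]; eapply Rle_trans; [apply Rmin_r| apply Rmin_l]).
  assert (Hz3 : Cmod (Cminus z l0) < c * m ^ n0 / D) by (eapply Rlt_le_trans; [exact Hz|]; eapply Rle_trans; [apply Rmin_r| apply Rmin_r]).
  pose proof (Hball z Hz1) as HHz.
  destruct (H_facts z HHz) as [Hx [Hy [HN [Hcc Hl]]]].
  set (x := fst z) in *. set (y := snd z) in *.
  assert (Hym : m < y).
  { pose proof (im_le_Cmod (Cminus z l0)) as Hi. simpl in Hi. fold x y y0 in Hi.
    apply Rabs_le_between in Hi. unfold m in *. lra. }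
  set (z0 := Cplus 1 (psum a0 z n0)).
  assert (Hz0b : Cmod z0 <= c * m ^ n0).
  { assert (E : z0 = Cminus (psum a0 z n0) (psum a0 l0 n0)).
    { unfold z0. replace (psum a0 l0 n0) with (Cminus (Cplus 1 (psum a0 l0 n0)) 1) by (unfold Cminus; ring).
      rewrite Hz0. unfold Cminus; ring. }
    rewrite E. eapply Rle_trans; [apply psum_lip; auto; lra|].
    pose proof (Cmod_ge_0 (Cminus z l0)).
    assert (INR n0 * INR n0 <= D) by (unfold D; lra).
    assert (Cmod (Cminus z l0) * D < c * m ^ n0).
    { apply Rmult_lt_reg_r with (/ D). apply Rinv_0_lt_compat; lra.
      rewrite Rmult_assoc, Rinv_r by lra. lra. }
    pose proof (pos_INR n0). nra. }
  assert (Hz_ne : z <> RtoC 0).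
  { intro E. unfold y in Hy. rewrite E in Hy. simpl in Hy. lra. }
  assert (Hpn : Cpow z n0 <> RtoC 0) by (apply Cpow_nz; exact Hz_ne).
  set (w := Cdiv z0 (Cpow z n0)).
  assert (Hmz : m <= Cmod z).
  { pose proof (im_le_Cmod z) as Hiz. change (Im z) with y in Hiz. pose proof (Rle_abs y). lra. }
  assert (Hw : Cmod w <= c).
  { unfold w. rewrite Cmod_div by exact Hpn. rewrite Cmod_pow.
    assert (m ^ n0 <= Cmod z ^ n0) by (apply pow_incr; lra).
    apply Rmult_le_reg_r with (Cmod z ^ n0); [lra|].
    unfold Rdiv. rewrite Rmult_assoc, Rinv_l by lra. rewrite Rmult_1_r.
    pose proof (Cmod_ge_0 z0). nra. }
  set (s0 := Im w / y). set (t0 := Re w - s0 * x).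
  assert (HR : Rval (s0, t0) z = w).
  { unfold s0, t0, x, y. apply Rval_coord. exact Hy. }
  apply inM_of with n0 a0 (s0, t0); auto.
  - rewrite HR. unfold w. fold z0. field. exact Hpn.
  - fold x y. unfold Inv; simpl.
    pose proof (re_le_Cmod w) as Hre. pose proof (im_le_Cmod w) as Him.
    pose proof (Cmod_ge_0 w).
    assert (HKc : K * c = 1/2) by (unfold c; field; lra).
    assert (Hs0 : Rabs s0 <= 2 / y0 * Cmod w).
    { unfold s0. unfold Rdiv. rewrite Rabs_mult, Rabs_inv, (Rabs_pos_eq y) by lra.
      assert (/ y <= 2 / y0).
      { unfold m in Hym. apply Rle_trans with (/ (y0/2)).
        apply Rinv_le_contravar; lra. right; field; lra. }
      pose proof (Rabs_pos (Im w)). unfold Rdiv in *.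
      assert (0 < / y) by (apply Rinv_0_lt_compat; lra).
      nra. }
    assert (2 / y0 * Cmod w <= 1/2).
    { assert (K * Cmod w <= 1/2) by nra. unfold K in *. nra. }
    assert (1 <= 1 / (2 * (x * x + y * y))).
    { assert (E : 1 / (2 * (x * x + y * y)) = 1 + (1 - 2 * (x * x + y * y)) / (2 * (x * x + y * y))) by (field; nra).
      rewrite E. assert (0 <= (1 - 2 * (x * x + y * y)) / (2 * (x * x + y * y))).
      { apply Rdiv_le_0_compat; nra. } lra. }
    split.
    + lra.
    + unfold t0. apply Rabs_le.
      assert (x < 1) by nra.
      assert (Rabs (s0 * x) <= Rabs s0) by (rewrite Rabs_mult, (Rabs_pos_eq x) by lra; pose proof (Rabs_pos s0); nra).
      apply Rabs_le_between in Hre. pose proof (Rabs_le_between (s0 * x) (Rabs s0)) as [HH _].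
      specialize (HH ltac:(assumption)).
      assert (K * Cmod w <= 1/2) by nra. unfold K in *. nra.
Qed.
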